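(* For any simple connected graph $G$ with at least one edge, $src(G)\geq \chi'(G)\geq \omega'(G)$. Moreover, if an edge coloring $f$ of $G$ strongly rainbow connects $G$, then $f$ is a proper coloring of the vertices of the auxiliary graph $H(G)$.
   Context: An edge coloring of $G$ is any function $f:E(G)\to\{1,\dots,k\}$, $k\in\mathbb{N}$ (adjacent edges may share a color). A path is rainbow with respect to $f$ if its edges receive pairwise distinct colors. $f$ strongly rainbow connects $G$ if for every pair of distinct vertices $u,v$ there is a shortest $(u,v)$-path that is rainbow; $src(G)$ is the minimum $k$ for which such an $f:E(G)\to\{1,\dots,k\}$ exists. For distinct $u_1,u_2\in V(G)$, an edge $e$ separates $u_1,u_2$ if $e$ lies on every shortest $(u_1,u_2)$-path in $G$. The auxiliary graph $H(G)$ has vertex set $E(G)$, and two distinct edges $e_1,e_2\in E(G)$ are adjacent in $H(G)$ iff there exists a pair of distinct vertices $v_1,v_2\in V(G)$ separated by both $e_1$ and $e_2$. Define $\omega'(G)=\omega(H(G))$ (clique number) and $\chi'(G)=\chi(H(G))$ (chromatic number). Since $V(H(G))=E(G)$, an edge coloring of $G$ is a coloring of the vertices of $H(G)$. *)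

(* Defs.v *)
From HB Require Import structures.
From mathcomp Require Import all_boot.
From Stdlib Require Import ClassicalEpsilon.

Set Implicit Arguments.
Unset Strict Implicit.
Unset Printing Implicit Defensive.

Definition classic_bool (P : Prop) : bool :=
  if excluded_middle_informative P then true else false.

Lemma classic_boolP (P : Prop) : reflect P (classic_bool P).
Proof. rewrite /classic_bool; case: excluded_middle_informative => h; constructor => //. Qed.

Lemma classic_bool_ex (P : nat -> Prop) :
  (exists n, P n) -> exists n, classic_bool (P n).
Proof. by case=> n Pn; exists n; apply/classic_boolP. Qed.

(* The least natural number satisfying P (0 if there is none). *)
Definition nat_min (P : nat -> Prop) : nat :=
  match excluded_middle_informative (exists n, P n) with
  | left h => ex_minn (classic_bool_ex h)
  | right _ => 0
  end.

Definition is_clique (V : finType) (adj : V -> V -> Prop) (S : {set V}) : Prop :=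
  forall x y, x \in S -> y \in S -> x != y -> adj x y.

Definition clique_number (V : finType) (adj : V -> V -> Prop) : nat :=
  \max_(S : {set V} | classic_bool (is_clique adj S)) #|S|.

Definition proper_coloring (V : finType) (adj : V -> V -> Prop) (C : Type)
  (c : V -> C) : Prop :=
  forall x y, adj x y -> c x <> c y.

Definition chromatic_number (V : finType) (adj : V -> V -> Prop) : nat :=
  nat_min (fun k => exists c : V -> 'I_k, proper_coloring adj c).

Section Graph.
Variables (T : finType) (g : rel T).

Definition edge_set : {set {set T}} :=
  [set A | [exists x, exists y, g x y && (A == [set x; y])]].

Definition edgeT : finType := {A : {set T} | A \in edge_set}.


(* a walk from u is a sequence p with u :: p an g-path; it ends at last u p;
   its length is size p *)
Definition walk (u v : T) (p : seq T) : Prop := path g u p /\ last u p = v.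

Definition shortest (u v : T) (p : seq T) : Prop :=
  walk u v p /\ forall q, walk u v q -> size p <= size q.

Definition walk_edges (u : T) (p : seq T) : seq {set T} :=
  [seq [set xy.1; xy.2] | xy <- zip (u :: p) p].

Definition on_walk (e : edgeT) (u : T) (p : seq T) : Prop :=
  val e \in walk_edges u p.

(* color of a vertex set under an edge coloring (None if not an edge) *)
Definition colorS k (f : edgeT -> 'I_k) (A : {set T}) : option 'I_k :=
  omap f (insub A : option edgeT).

Definition rainbow k (f : edgeT -> 'I_k) (u : T) (p : seq T) : Prop :=
  uniq [seq colorS f A | A <- walk_edges u p].

Definition strongly_rainbow k (f : edgeT -> 'I_k) : Prop :=
  forall u v, u != v -> exists p, shortest u v p /\ rainbow f u p.

Definition src : nat :=
  nat_min (fun k => exists f : edgeT -> 'I_k, strongly_rainbow f).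

Definition separates (e : edgeT) (u1 u2 : T) : Prop :=
  forall p, shortest u1 u2 p -> on_walk e u1 p.

Definition H_adj (e1 e2 : edgeT) : Prop :=
  e1 != e2 /\ exists v1 v2, v1 != v2 /\ separates e1 v1 v2 /\ separates e2 v1 v2.

Definition omega' : nat := clique_number H_adj.
Definition chi' : nat := chromatic_number H_adj.

End Graph.

(* Main.v *)
Require Import Defs.
From mathcomp Require Import all_boot.
From Stdlib Require Import ClassicalEpsilon.

Set Implicit Arguments.
Unset Strict Implicit.
Unset Printing Implicit Defensive.

Lemma nat_minP (P : nat -> Prop) : (exists n, P n) -> P (nat_min P).
Proof.
move=> ex; rewrite /nat_min; case: excluded_middle_informative => // h.
case: ex_minnP => m /classic_boolP //.
Qed.

Lemma nat_min_le (P : nat -> Prop) n : P n -> nat_min P <= n.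
Proof.
move=> Pn; rewrite /nat_min; case: excluded_middle_informative => // h.
case: ex_minnP => m _ H; apply: H; exact/classic_boolP.
Qed.

Lemma uniq_map_eq (A B : eqType) (h : A -> B) (s : seq A) x y :
  uniq (map h s) -> x \in s -> y \in s -> h x = h y -> x = y.
Proof.
elim: s => //= a s IH /andP[ha us].
rewrite !inE => /orP[/eqP->|xs] /orP[/eqP->|ys] //.
- move=> e; case/negP: ha; rewrite e; exact: map_f.
- move=> e; case/negP: ha; rewrite -e; exact: map_f.
- exact: IH.
Qed.

Section G.
Variables (T : finType) (g : rel T).

Lemma walk_uniq u v p : walk g u v p ->
  exists q, [/\ walk g u v q, uniq (u :: q) & size q <= size p].
Proof.
elim: p u => [|y p IH] u /=.
  by move=> w; exists [::]; split => //.
case=> /andP[guy py] ly.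
have [q [[pq lq] uq sq]] := IH y (conj py ly).
case: (boolP (u \in y :: q)) => uin.
- have pyq : path g u (y :: q) by rewrite /= guy pq.
  have lq' : last u (y :: q) = v by [].
  move: sq; rewrite -[size q]/(size (y :: q)).-1 => sq.
  clear pq lq; case/splitPr: uin uq pyq lq' sq => r1 r2 uq pq lq sq.
  exists r2; split.
  + move: pq; rewrite cat_path => /andP[_] /=.
    move=> /andP[_ pr2]; split => //.
    by move: lq; rewrite last_cat.
  + by move: uq; rewrite cat_uniq => /and3P[_ _].
  + move: sq; rewrite size_cat /= addnS /= => sq.
    apply: leq_trans (leq_addl _ _) _; apply: leq_trans sq _; exact: leqnSn.
- exists (y :: q); split.
  + by split; rewrite /= ?guy ?pq.
  + by rewrite /= uin; move: uq => /= ->.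
  + by [].
Qed.

Lemma walk_edges_mem (u : T) p A z : A \in walk_edges u p -> z \in A -> z \in u :: p.
Proof.
elim: p u => [|y p IH] u //=.
rewrite inE => /orP[/eqP->|H].
  by rewrite !inE => /orP[]->; rewrite ?orbT.
move=> zA; have := IH y H zA; rewrite [z \in u :: _]inE => ->; by rewrite orbT.
Qed.

Lemma walk_edges_uniq (u : T) p : uniq (u :: p) -> uniq (walk_edges u p).
Proof.
elim: p u => [|y p IH] u //= /andP[uy uyp].
rewrite IH // andbT; apply/negP => H.
have := walk_edges_mem H (z := u); rewrite !inE eqxx => /(_ isT).
by move: uy; rewrite inE => /negbTE->.
Qed.

Lemma walk_edges_edge u p A : path g u p -> A \in walk_edges u p -> A \in edge_set g.
Proof.
elim: p u => [|y p IH] u //= /andP[guy py].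
rewrite inE => /orP[/eqP->|H]; last exact: IH H.
rewrite inE; apply/existsP; exists u; apply/existsP; exists y; by rewrite guy eqxx.
Qed.

Lemma colorS_val k (f : edgeT g -> 'I_k) (e : edgeT g) : colorS f (val e) = Some (f e).
Proof. by rewrite /colorS valK. Qed.

Lemma shortest_exists u v : connect g u v ->
  exists q, shortest g u v q /\ uniq (u :: q).
Proof.
move=> /connectP[p pp lp].
have ex : exists n, (fun n => exists p, walk g u v p /\ size p = n) n.
  by exists (size p), p; split.
have := nat_minP ex; case=> q [wq sq].
have [q' [wq' uq' sq']] := walk_uniq wq.
exists q'; split => //; split => // r wr.
apply: leq_trans sq' _; rewrite sq; apply: nat_min_le; by exists r.
Qed.

Lemma rainbow_proper k (f : edgeT g -> 'I_k) :
  strongly_rainbow f -> proper_coloring (@H_adj T g) f.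
Proof.
move=> sr e1 e2 [ne [v1 [v2 [nv [s1 s2]]]]] fe.
have [p [sp rp]] := sr v1 v2 nv.
have h1 := s1 p sp; have h2 := s2 p sp.
have := uniq_map_eq rp h1 h2; rewrite !colorS_val fe => /(_ erefl) /val_inj.
by move=> E; rewrite E eqxx in ne.
Qed.

Lemma src_exists : (forall x y : T, connect g x y) ->
  exists f : edgeT g -> 'I_#|edgeT g|, strongly_rainbow f.
Proof.
move=> conn; exists enum_rank => u v _.
have [q [sq uq]] := shortest_exists (conn u v).
exists q; split => //; rewrite /rainbow map_inj_in_uniq; first exact: walk_edges_uniq.
move=> A B HA HB.
have EA := walk_edges_edge sq.1.1 HA.
have EB := walk_edges_edge sq.1.1 HB.
rewrite (_ : A = val (Sub A EA : edgeT g)) // (_ : B = val (Sub B EB : edgeT g)) //.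
by rewrite !colorS_val => -[/enum_rank_inj ->].
Qed.

End G.

Theorem theorem1 (T : finType) (g : rel T) :
  symmetric g -> irreflexive g ->
  (forall x y : T, connect g x y) ->
  (exists x y : T, g x y) ->
  [/\ chi' g <= src g,
      omega' g <= chi' g &
      forall (k : nat) (f : edgeT g -> 'I_k),
        strongly_rainbow f -> proper_coloring (@H_adj T g) f].
Proof.
move=> _ _ conn _; split; last exact: rainbow_proper.
- have ex : exists k, exists f : edgeT g -> 'I_k, strongly_rainbow f.
    by exists #|edgeT g|; exact: src_exists.
  have [f sf] := nat_minP ex.
  apply: nat_min_le; exists f; exact: rainbow_proper.
- have ex : exists k, exists c : edgeT g -> 'I_k, proper_coloring (@H_adj T g) c.
    exists #|edgeT g|, enum_rank => x y [ne _] /enum_rank_inj E.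
    by rewrite E eqxx in ne.
  have [c pc] := nat_minP ex.
  rewrite /omega' /clique_number; apply/bigmax_leqP => S /classic_boolP cS.
  rewrite -(card_in_imset (f := c)); last first.
    move=> x y xS yS E; apply/eqP; apply/negPn/negP => ne.
    exact: pc _ _ (cS x y xS yS ne) E.
  rewrite /chi' /chromatic_number.
  by apply: leq_trans (max_card _) _; rewrite card_ord.
Qed.
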